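(* Let $S$ be an inverse semigroup. Then $S$ is a weak semilattice if and only if $\mathsf{D}(S)$ is a $\wedge$-semigroup.
   Context: For $X\subseteq S$ let $X^{\downarrow}=\{s\in S : s\le x \text{ for some } x\in X\}$ (natural partial order), and $a^{\downarrow}=\{a\}^{\downarrow}$. Elements $s,t$ are compatible if $s^{-1}t$ and $st^{-1}$ are idempotents. $\mathsf{D}(S)$ is the set of all subsets of $S$ of the form $\{a_1,\dots,a_m\}^{\downarrow}$ where $\{a_1,\dots,a_m\}$ is a finite (possibly empty) set of pairwise compatible elements of $S$; it is an inverse semigroup under subset multiplication, whose natural partial order is inclusion. $S$ is a weak semilattice if for all $a,b\in S$ the set $a^{\downarrow}\cap b^{\downarrow}$ equals $F^{\downarrow}$ for some finite subset $F\subseteq S$. An inverse semigroup is a $\wedge$-semigroup if every pair of elements has a meet with respect to the natural partial order. *)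

(* Defs.v *)
From Stdlib Require Import List.
Import ListNotations.

(* This is the standard definition (regular semigroup with
   commuting idempotents; the inverse is then unique). *)
Record InverseSemigroup := {
  carrier :> Type;
  mul : carrier -> carrier -> carrier;
  inv : carrier -> carrier;
  mulA : forall x y z, mul x (mul y z) = mul (mul x y) z;
  mul_inv_mul : forall x, mul (mul x (inv x)) x = x;
  inv_mul_inv : forall x, mul (mul (inv x) x) (inv x) = inv x;
  idem_comm : forall e f, mul e e = e -> mul f f = f -> mul e f = mul f e
}.

Section Defs.
Variable S : InverseSemigroup.

Definition idempotent (e : S) : Prop := mul S e e = e.

Definition nle (s t : S) : Prop := exists e : S, idempotent e /\ s = mul S e t.

Definition down (X : S -> Prop) : S -> Prop :=
  fun s => exists x, X x /\ nle s x.

Definition down1 (a : S) : S -> Prop := down (fun x => x = a).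

Definition of_list (l : list S) : S -> Prop := fun x => In x l.

Definition compatible (s t : S) : Prop :=
  idempotent (mul S (inv S s) t) /\ idempotent (mul S s (inv S t)).

Definition pairwise_compatible (l : list S) : Prop :=
  forall x y, In x l -> In y l -> compatible x y.

Definition inD (A : S -> Prop) : Prop :=
  exists l : list S, pairwise_compatible l /\ A = down (of_list l).

Definition subset (A B : S -> Prop) : Prop := forall x, A x -> B x.

Definition inter (A B : S -> Prop) : S -> Prop := fun x => A x /\ B x.

Definition weak_semilattice : Prop :=
  forall a b : S, exists F : list S, inter (down1 a) (down1 b) = down (of_list F).

(* D(S) is a wedge-semigroup: every pair of elements of D(S) has a meet
   with respect to the natural partial order of D(S), which is inclusion. *)
Definition D_wedge_semigroup : Prop :=
  forall A B, inD A -> inD B ->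
    exists C, inD C /\ subset C A /\ subset C B /\
      (forall E, inD E -> subset E A -> subset E B -> subset E C).

End Defs.

(* Main.v *)
Require Import Defs.
From Stdlib Require Import List FunctionalExtensionality PropExtensionality.
Import ListNotations.

Section Aux.
Variable S : InverseSemigroup.
Local Notation "x # y" := (mul S x y) (at level 40, left associativity).
Local Notation iv := (inv S).

Ltac assoc := repeat rewrite (mulA S); reflexivity.

Lemma idem_xxi (x : S) : idempotent S (x # iv x).
Proof. unfold idempotent. rewrite mulA, mul_inv_mul. reflexivity. Qed.

Lemma idem_xix (x : S) : idempotent S (iv x # x).
Proof. unfold idempotent. rewrite mulA, inv_mul_inv. reflexivity. Qed.

Lemma idem_mul (e f : S) : idempotent S e -> idempotent S f -> idempotent S (e # f).
Proof.
  unfold idempotent; intros He Hf.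
  transitivity (e # (f # e) # f). assoc.
  rewrite (idem_comm S f e Hf He).
  transitivity ((e # e) # (f # f)). assoc.
  rewrite He, Hf. reflexivity.
Qed.

Lemma inv_unique (x y : S) : (x # y) # x = x -> (y # x) # y = y -> y = iv x.
Proof.
  intros H1 H2.
  assert (Iyx : idempotent S (y # x)).
  { unfold idempotent. transitivity ((y # x # y) # x). assoc. rewrite H2. reflexivity. }
  assert (Ixy : idempotent S (x # y)).
  { unfold idempotent. transitivity ((x # y # x) # y). assoc. rewrite H1. reflexivity. }
  transitivity (y # x # iv x).
  - transitivity (y # (x # iv x # x) # y). rewrite mul_inv_mul. rewrite H2. reflexivity.
    transitivity (y # ((x # iv x) # (x # y))). assoc.
    rewrite (idem_comm S _ _ (idem_xxi x) Ixy).
    transitivity ((y # x # y) # (x # iv x)). assoc.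
    rewrite H2. assoc.
  - transitivity (iv x # (x # y # x) # iv x).
    2: { rewrite H1. apply inv_mul_inv. }
    transitivity ((y # x) # (iv x # x) # iv x).
    2: { rewrite <- (idem_comm S _ _ (idem_xix x) Iyx). assoc. }
    transitivity (y # x # (iv x # x # iv x)). rewrite inv_mul_inv. reflexivity.
    assoc.
Qed.

Lemma inv_es (e s : S) : idempotent S e -> iv (e # s) = iv s # e.
Proof.
  intro He. symmetry. apply inv_unique.
  - transitivity (e # ((s # iv s) # (e # e)) # s). assoc.
    rewrite He. rewrite (idem_comm S _ _ (idem_xxi s) He).
    transitivity ((e # e) # (s # iv s # s)). assoc.
    rewrite He, mul_inv_mul. reflexivity.
  - transitivity (iv s # ((e # e) # (s # iv s)) # e). assoc.
    rewrite He. rewrite (idem_comm S _ _ He (idem_xxi s)).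
    transitivity ((iv s # s # iv s) # (e # e)). assoc.
    rewrite He, inv_mul_inv. reflexivity.
Qed.

Lemma idem_conj (g s : S) : idempotent S g -> idempotent S (iv s # g # s).
Proof.
  unfold idempotent; intro Hg.
  transitivity (iv s # (g # (s # iv s)) # g # s). assoc.
  rewrite (idem_comm S _ _ Hg (idem_xxi s)).
  transitivity ((iv s # s # iv s) # (g # g) # s). assoc.
  rewrite inv_mul_inv, Hg. reflexivity.
Qed.

Lemma nle_refl (x : S) : nle S x x.
Proof. exists (x # iv x). split. apply idem_xxi. symmetry. apply mul_inv_mul. Qed.

Lemma nle_trans (x y z : S) : nle S x y -> nle S y z -> nle S x z.
Proof.
  intros [e [He ->]] [f [Hf ->]]. exists (e # f). split.
  apply idem_mul; assumption. apply mulA.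
Qed.

Lemma compat_down (s t s' t' : S) :
  compatible S s t -> nle S s' s -> nle S t' t -> compatible S s' t'.
Proof.
  intros [H1 H2] [e [He ->]] [f [Hf ->]]. unfold compatible.
  rewrite !inv_es by assumption. split.
  - replace (iv s # e # (f # t)) with ((iv s # (e # f) # s) # (iv s # t)).
    + apply idem_mul; auto. apply idem_conj. apply idem_mul; auto.
    + transitivity (iv s # ((e # f) # (s # iv s)) # t). assoc.
      rewrite (idem_comm S _ _ (idem_mul _ _ He Hf) (idem_xxi s)).
      transitivity ((iv s # s # iv s) # e # f # t). assoc.
      rewrite inv_mul_inv. assoc.
  - replace (e # s # (iv t # f)) with (e # (s # iv t) # f) by assoc.
    apply idem_mul; auto. apply idem_mul; auto.
Qed.

Definition dl (l : list S) (x : S) := exists y, In y l /\ nle S x y.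

Lemma dl_app l1 l2 x : dl (l1 ++ l2) x <-> dl l1 x \/ dl l2 x.
Proof.
  split.
  - intros [y [Hy Hn]]. apply in_app_iff in Hy as [Hy|Hy]; [left|right]; exists y; auto.
  - intros [[y [Hy Hn]]|[y [Hy Hn]]]; exists y; split; auto; apply in_app_iff; auto.
Qed.

Lemma dl_cons a l x : dl (a :: l) x <-> nle S x a \/ dl l x.
Proof.
  split.
  - intros [y [[<-|Hy] Hn]]; [left|right]; auto. exists y; auto.
  - intros [Hn|[y [Hy Hn]]]. exists a; split; simpl; auto. exists y; split; simpl; auto.
Qed.

Lemma down1_iff a x : down1 S a x <-> nle S x a.
Proof. split. intros [y [-> H]]; exact H. intro H; exists a; auto. Qed.

Lemma down1_eq a : down1 S a = down S (of_list S [a]).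
Proof.
  apply functional_extensionality; intro x; apply propositional_extensionality.
  rewrite down1_iff. change (nle S x a <-> dl [a] x). rewrite dl_cons.
  split. auto. intros [H|[y [[] _]]]. exact H.
Qed.

Lemma inD_down1 a : inD S (down1 S a).
Proof.
  exists [a]. split. 2: apply down1_eq.
  intros x y [<-|[]] [<-|[]]. split. apply idem_xix. apply idem_xxi.
Qed.

Lemma build1 (W : weak_semilattice S) a : forall L2, exists F,
  forall x, (nle S x a /\ dl L2 x) <-> dl F x.
Proof.
  induction L2 as [|b L2 IH].
  - exists []. intro x. split. intros [_ [y [[] _]]]. intros [y [[] _]].
  - destruct IH as [F1 HF1]. destruct (W a b) as [Fab HFab].
    exists (Fab ++ F1). intro x. rewrite dl_app, dl_cons, <- HF1.
    assert (E : (nle S x a /\ nle S x b) <-> dl Fab x).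
    { change (dl Fab x) with (down S (of_list S Fab) x). rewrite <- HFab.
      unfold inter. rewrite !down1_iff. tauto. }
    rewrite <- E. tauto.
Qed.

Lemma build (W : weak_semilattice S) L1 L2 : exists F,
  forall x, (dl L1 x /\ dl L2 x) <-> dl F x.
Proof.
  induction L1 as [|a L1 IH].
  - exists []. intro x. split. intros [[y [[] _]] _]. intros [y [[] _]].
  - destruct IH as [F1 HF1]. destruct (build1 W a L2) as [Fa HFa].
    exists (Fa ++ F1). intro x. rewrite dl_app, dl_cons, <- HF1, <- HFa. tauto.
Qed.

End Aux.

Theorem lemma1p16 (S : InverseSemigroup) :
  weak_semilattice S <-> D_wedge_semigroup S.
Proof.
  split.
  - intros W A B [L1 [HL1 ->]] [L2 [HL2 ->]].
    destruct (build S W L1 L2) as [F HF].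
    exists (down S (of_list S F)). split; [|split; [|split]].
    + exists F. split; [|reflexivity].
      intros y y' Hy Hy'.
      assert (D1 : dl S F y) by (exists y; split; [exact Hy| apply nle_refl]).
      assert (D2 : dl S F y') by (exists y'; split; [exact Hy'| apply nle_refl]).
      apply HF in D1 as [[a [Ha Hya]] _]. apply HF in D2 as [[a' [Ha' Hya']] _].
      exact (compat_down S a a' y y' (HL1 a a' Ha Ha') Hya Hya').
    + intros x Hx. apply (proj2 (HF x)) in Hx. exact (proj1 Hx).
    + intros x Hx. apply (proj2 (HF x)) in Hx. exact (proj2 Hx).
    + intros E _ H1 H2 x Hx. apply (proj1 (HF x)). split; [apply H1|apply H2]; exact Hx.
  - intros Dw a b.
    destruct (Dw _ _ (inD_down1 S a) (inD_down1 S b)) as [C [[L [HL HC]] [HCA [HCB Hmax]]]].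
    exists L. rewrite <- HC.
    apply functional_extensionality; intro x; apply propositional_extensionality.
    split.
    + intros [Ha Hb].
      apply (Hmax (down1 S x) (inD_down1 S x)).
      * intros y Hy. apply down1_iff in Hy. apply down1_iff in Ha. apply down1_iff.
        eapply nle_trans; eassumption.
      * intros y Hy. apply down1_iff in Hy. apply down1_iff in Hb. apply down1_iff.
        eapply nle_trans; eassumption.
      * apply down1_iff, nle_refl.
    + intro Hx. split; auto.
Qed.
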